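(* Let $w\ge1$, $T\ge2\ln2$, and suppose $\alpha_2^2\le\frac{\ln w}{4}$, $\alpha_1\sqrt w\ge\ln w$, and $\frac{\ln w}{\alpha_2}\le\frac{\sqrt w\,\alpha_1}{\beta}$. If the solution of the guided probability flow ODE satisfies $\tilde x(e^{-T})\ge-\frac{\sqrt w\,\alpha_1}{16\beta}$ (i.e. $x(0)\ge -\frac{\sqrt w\,\alpha_1}{16\beta}$), then there exists a time $s_0\in[e^{-T},1]$ with $$\tilde x(s_0)\ge\frac{\ln w}{16\alpha_2}.$$
   Context: Let $0<\alpha_1<\alpha_2$ and $\beta\ge1$. Let $p^{(1)}$ and $p^{(-1)}$ be probability densities on $\mathbb R$ supported on $[\alpha_1,\alpha_2]$ and $[-\alpha_2,-\alpha_1]$ respectively, which are $\beta$-bounded with respect to each other: $\frac1\beta\le \frac{p^{(-1)}(x_1)}{p^{(1)}(x_2)}\le\beta$ for all $x_1\in(-\alpha_2,-\alpha_1)$, $x_2\in(\alpha_1,\alpha_2)$. Let $p=\frac12p^{(1)}+\frac12p^{(-1)}$, and let $(X_0,z)$ be jointly distributed with $z$ uniform on $\{\pm1\}$ and $X_0\mid z\sim p^{(z)}$. Fix $T>0$; for $t\in[0,T]$ put $a_t=e^{t-T}$, $b_t=\sqrt{1-a_t^2}$, and $X_t=a_tX_0+\xi_t$ with $\xi_t\sim\mathcal N(0,b_t^2)$ independent of $(X_0,z)$. Let $p_t$ denote the density of $X_t$ and $p_t(\cdot\mid z=\pm1)$ the conditional density of $X_t$ given $z=\pm1$. For a guidance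 parameter $w\ge0$, the guided probability flow ODE is $x'(t)=x(t)+(w+1)\nabla\log p_t(x(t)\mid z=1)-w\nabla\log p_t(x(t))$, $t\in[0,T)$. Time is reparametrized by $s=a_t=e^{t-T}\in[e^{-T},1]$, $\tilde x(s)=x(T+\ln s)$. *)

(* Defs.v *)
From HB Require Import structures.
From mathcomp Require Import all_boot all_order all_algebra.
From mathcomp Require Import all_classical all_reals all_analysis.
Set Implicit Arguments. Unset Strict Implicit. Unset Printing Implicit Defensive.
Import Order.TTheory GRing.Theory Num.Theory.
Import numFieldNormedType.Exports.
Local Open Scope classical_set_scope.
Local Open Scope ring_scope.

Definition a_t {R : realType} (T t : R) : R := expR (t - T).
Definition b_t {R : realType} (T t : R) : R := Num.sqrt (1 - a_t T t ^+ 2).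

Definition gauss {R : realType} (b x : R) : R :=
  expR (- (x ^+ 2) / (2 * b ^+ 2)) / Num.sqrt (2 * pi * b ^+ 2).

Definition density_on {R : realType} (q : R -> R) (lo hi : R) : Prop :=
  measurable_fun setT q /\ (forall x, 0 <= q x) /\
  (\int[lebesgue_measure]_(x in setT) (q x)%:E = 1)%E /\
  (forall x, ~ (lo <= x <= hi) -> q x = 0).

(* beta-boundedness of p^(-1) (q) w.r.t. p^(1) (p) *)
Definition beta_bounded {R : realType} (p q : R -> R) (al1 al2 beta : R) : Prop :=
  forall x1 x2, - al2 < x1 < - al1 -> al1 < x2 < al2 ->
    beta^-1 <= q x1 / p x2 <= beta.

(* density of X_t = a_t X_0 + xi_t, X_0 ~ q, xi_t ~ N(0, b_t^2) independent *)
Definition cond_density {R : realType} (q : R -> R) (T t x : R) : R :=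
  Rintegral lebesgue_measure setT
    (fun y => q y * gauss (b_t T t) (x - a_t T t * y)).

Definition mix_density {R : realType} (p1 pm1 : R -> R) (T t x : R) : R :=
  2^-1 * cond_density p1 T t x + 2^-1 * cond_density pm1 T t x.

Definition score {R : realType} (f : R -> R) (x : R) : R :=
  derive1 (fun u => ln (f u)) x.

Definition guided_field {R : realType} (p1 pm1 : R -> R) (w T t x : R) : R :=
  x + (w + 1) * score (cond_density p1 T t) x
    - w * score (mix_density p1 pm1 T t) x.

Definition guided_solution {R : realType} (p1 pm1 : R -> R) (w T : R)
    (x : R -> R) : Prop :=
  {within `[0, T], continuous x} /\
  (forall t, 0 < t < T ->
     derivable x t 1 /\ derive1 x t = guided_field p1 pm1 w T t (x t)).

(* reparametrization s = a_t : xtilde(s) = x(T + ln s) *)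
Definition xtilde {R : realType} (x : R -> R) (T s : R) : R := x (T + ln s).

(* Main.v *)
Require Import Defs.
From HB Require Import structures.
From mathcomp Require Import all_boot all_order all_algebra.
From mathcomp Require Import all_classical all_reals all_analysis.
From mathcomp Require Import ring lra.
From mathcomp Require Import measurable_realfun lebesgue_integral_under.
Import Order.TTheory GRing.Theory Num.Theory.
Import numFieldNormedType.Exports.
Local Open Scope classical_set_scope.
Local Open Scope ring_scope.

Section helpers.
Context {R : realType}.
Local Notation mu := (@lebesgue_measure R).

Lemma boundedP (f : R -> R) (A : set R) M :
  (forall x, A x -> `|f x| <= M) -> [bounded f x | x in A].
Proof.
move=> fM; exists M; split; first exact: num_real.
by move=> N MN y Ay; exact: le_trans (fM y Ay) (ltW MN).
Qed.

Lemma dens_int (q : R -> R) lo hi : density_on q lo hi ->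
  mu.-integrable setT (EFin \o q).
Proof.
case=> mq [q0 [iq _]]; apply/integrableP; split; first exact/measurable_EFinP.
under eq_integral => y _ do rewrite /= ger0_norm//.
by rewrite iq ltry.
Qed.
Arguments dens_int [q lo hi].


Lemma is_derive_gauss_u (b u : R) :
  is_derive u 1 (gauss b) (gauss b u * (- u / b ^+ 2)).
Proof.
rewrite /gauss.
set c := (Num.sqrt _)^-1.
have -> : (fun x0 => expR (- x0 ^+ 2 / (2 * b ^+ 2)) / Num.sqrt (2 * pi * b ^+ 2))
   = (fun x0 => (expR \o (fun x0 => - x0 ^+ 2 / (2 * b ^+ 2))) x0 * c).
  by apply/funext => z.
apply: trigger_derive.
rewrite !(scaler0, add0r, subr0) /GRing.scale /=.
have [->|b0] := eqVneq b 0; first by rewrite !expr2 !(mulr0, mul0r, invr0).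
field; exact: b0.
Qed.

Lemma gauss_cont (b : R) : continuous (gauss b).
Proof.
move=> u; apply/differentiable_continuous/derivable1_diffP.
by have [] := is_derive_gauss_u b u.
Qed.

Lemma gauss_ge0 (b u : R) : 0 <= gauss b u.
Proof. by rewrite /gauss divr_ge0 ?expR_ge0 ?sqrtr_ge0. Qed.

Lemma gauss_le (b u : R) : gauss b u <= (Num.sqrt (2 * pi * b ^+ 2))^-1.
Proof.
rewrite /gauss -[X in _ <= X]mul1r ler_wpM2r ?invr_ge0 ?sqrtr_ge0 //.
by rewrite expR_le1 mulNr oppr_le0 divr_ge0 ?sqr_ge0 // mulr_ge0 // sqr_ge0.
Qed.

Lemma expN_bound (b u : R) : 0 < b -> `|u| * expR (- u ^+ 2 / (2 * b ^+ 2)) <= b.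
Proof.
move=> b0; rewrite mulNr expRN ler_pdivrMr ?expR_gt0 //.
have h1 := expR_ge1Dx (u ^+ 2 / (2 * b ^+ 2)).
have h2 : b * (1 + u ^+ 2 / (2 * b ^+ 2)) = b + `|u| ^+ 2 / (2 * b).
  by rewrite real_normK ?num_real //; field; rewrite lt0r_neq0.
have h3 : b + `|u| ^+ 2 / (2 * b) - `|u| = ((`|u| - b) ^+ 2 + b ^+ 2) / (2 * b).
  by field; rewrite lt0r_neq0.
have h4 : 0 <= ((`|u| - b) ^+ 2 + b ^+ 2) / (2 * b).
  by rewrite divr_ge0 ?addr_ge0 ?sqr_ge0 // mulr_ge0 // ltW.
apply: (le_trans (y := b * (1 + u ^+ 2 / (2 * b ^+ 2)))); last first.
  by rewrite ler_wpM2l // ltW.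
by rewrite h2 -subr_ge0 h3.
Qed.

Lemma dgauss_bound (b u : R) : 0 < b ->
  `|gauss b u * (- u / b ^+ 2)| <= (Num.sqrt (2 * pi * b ^+ 2))^-1 / b.
Proof.
move=> b0; rewrite normrM ger0_norm ?gauss_ge0 // normrM normrN normfV /gauss.
rewrite [`|b ^+ 2|]ger0_norm ?sqr_ge0 //.
have := @expN_bound b u b0.
set e := expR _; set c := (Num.sqrt _)^-1 => h.
have c0 : 0 <= c by rewrite invr_ge0 sqrtr_ge0.
have -> : e * c * (`|u| / b ^+ 2) = c * (`|u| * e) / b ^+ 2 by ring.
apply: (le_trans (y := c * b / b ^+ 2)).
  by rewrite ler_wpM2r ?invr_ge0 ?sqr_ge0 // ler_wpM2l.
by rewrite le_eqVlt; apply/orP; left; apply/eqP; field; rewrite lt0r_neq0.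
Qed.

Lemma aff_cont (x a : R) : continuous (fun y : R => x - a * y).
Proof.
move=> y; apply/differentiable_continuous/derivable1_diffP.
have h : is_derive y 1 (fun y : R => x - a * y) (- (a * 1)).
  by apply: trigger_derive; rewrite /GRing.scale /=; ring.
by case: h.
Qed.

Lemma gauss_aff_cont (b x a : R) : continuous (fun y => gauss b (x - a * y)).
Proof.
move=> y; apply: (continuous_comp (aff_cont x a y)); exact: gauss_cont.
Qed.

Lemma int_qh (q : R -> R) lo hi (h : R -> R) M : density_on q lo hi ->
  measurable_fun setT h -> (forall y, `|h y| <= M) ->
  mu.-integrable setT (EFin \o (fun y => q y * h y)).
Proof.
move=> dq mh hM.
have := integrableMl measurableT (dens_int dq) mh (@boundedP h setT M (fun y _ => hM y)).
apply: eq_integrable => // y _ /=; by rewrite EFinM.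
Qed.
Arguments int_qh [q lo hi h M].


Lemma is_derive_qg (k b a y x : R) :
  is_derive x 1 (fun x => k * gauss b (x - a * y))
    (k * (gauss b (x - a * y) * (- (x - a * y) / b ^+ 2))).
Proof.
have h1 := is_derive_gauss_u b (x - a * y).
have h2 : is_derive x 1 (fun x : R => x - a * y) 1.
  by apply: trigger_derive; rewrite /GRing.scale /=; ring.
have h3 := @is_derive1_comp R (gauss b) (fun x => x - a * y) x _ _ h1 h2.
have -> : (fun x => k * gauss b (x - a * y)) =
  (fun x => k * (gauss b \o (fun x => x - a * y)) x) by [].
by apply: trigger_derive; rewrite /GRing.scale /=; ring.
Qed.

Definition gc (b : R) := (Num.sqrt (2 * pi * b ^+ 2))^-1.

Lemma int_deriv (q : R -> R) lo hi (b a x : R) : density_on q lo hi -> 0 < b ->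
  derivable (fun x => Rintegral mu setT (fun y => q y * gauss b (x - a * y))) x 1 /\
  derive1 (fun x => Rintegral mu setT (fun y => q y * gauss b (x - a * y))) x =
  Rintegral mu setT (fun y => q y * (gauss b (x - a * y) * (- (x - a * y) / b ^+ 2))).
Proof.
move=> dq b0.
have q0 : forall y, 0 <= q y by case: dq => _ [].
pose f := fun x y => q y * gauss b (x - a * y).
have Hd : forall x y : R, is_derive x (1:R) (f^~ y)
    (q y * (gauss b (x - a * y) * (- (x - a * y) / b ^+ 2))).
  by move=> x' y; exact: is_derive_qg.
have c0 : 0 <= gc b by rewrite /gc invr_ge0 sqrtr_ge0.
have intf : forall x', `](x - 1), (x + 1)[%classic x' ->
    mu.-integrable setT (EFin \o f x').
  move=> x' _; apply: (@int_qh q lo hi _ (gc b) dq).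
    by apply: continuous_measurable_fun; exact: gauss_aff_cont.
  by move=> y; rewrite ger0_norm ?gauss_ge0 // gauss_le.
have derf1 : forall x' y, `](x - 1), (x + 1)[%classic x' -> setT y ->
    derivable (f^~ y) x' 1.
  by move=> x' y _ _; have [] := Hd x' y.
pose G := fun y => q y * (gc b / b).
have G0 : forall y, 0 <= G y by move=> y; rewrite mulr_ge0 // divr_ge0 // ltW.
have intG : mu.-integrable setT (EFin \o G).
  apply: (@int_qh q lo hi _ (gc b / b) dq); first exact: measurable_cst.
  by move=> y; rewrite ger0_norm // divr_ge0 // ltW.
have Gub : forall x' y, `](x - 1), (x + 1)[%classic x' -> setT y ->
    `|partial1of2 f x' y| <= G y.
  move=> x' y _ _; rewrite /partial1of2 derive1E; have [_ ->] := Hd x' y.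
  by rewrite normrM ger0_norm // ler_wpM2l // dgauss_bound.
have Ix : `](x - 1), (x + 1)[%classic x.
  by rewrite /= in_itv /= ltrDl ltrBlDr ltrDl ltr01.
split; first exact: (derivable_under_integral measurableT Ix intf derf1 G0 intG Gub).
rewrite (differentiation_under_integral measurableT Ix intf derf1 G0 intG Gub).
congr Rintegral; apply/funext => y.
by rewrite /partial1of2 derive1E; have [_ ->] := Hd x y.
Qed.

Lemma score_eq (F : R -> R) x : derivable F x 1 -> 0 < F x ->
  score F x = derive1 F x / F x.
Proof.
move=> dF F0; rewrite /score.
have h1 := is_derive1_ln F0.
have h2 := derivableP dF.
have h3 := @is_derive1_comp R (@ln R) F x _ _ h1 h2.
have -> : (fun u => ln (F u)) = (@ln R \o F) by [].
rewrite derive1E; have [_ ->] := h3.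
by rewrite derive1E mulrC.
Qed.

Lemma mix_deriv (F1 F2 : R -> R) x : derivable F1 x 1 -> derivable F2 x 1 ->
  derivable (fun u => 2^-1 * F1 u + 2^-1 * F2 u) x 1 /\
  derive1 (fun u => 2^-1 * F1 u + 2^-1 * F2 u) x =
    2^-1 * derive1 F1 x + 2^-1 * derive1 F2 x.
Proof.
move=> d1 d2.
have h1 := derivableP d1; have h2 := derivableP d2.
have h : is_derive x (1:R) (fun u => 2^-1 * F1 u + 2^-1 * F2 u)
   (2^-1 * 'D_1 F1 x + 2^-1 * 'D_1 F2 x).
  by apply: trigger_derive; rewrite /GRing.scale /=; ring.
have [d e] := h; split => //.
by rewrite derive1E e !derive1E.
Qed.

Lemma lin_cont (x a k : R) : continuous (fun y : R => - (x - a * y) / k).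
Proof.
move=> y; apply/differentiable_continuous/derivable1_diffP.
have h : is_derive y (1:R) (fun y : R => - (x - a * y) / k) (a / k).
  by apply: trigger_derive; rewrite /GRing.scale /=; ring.
by case: h.
Qed.

Lemma int_qg (q : R -> R) lo hi (b a x : R) : density_on q lo hi ->
  mu.-integrable setT (EFin \o (fun y => q y * gauss b (x - a * y))).
Proof.
move=> dq; apply: (@int_qh q lo hi _ (gc b) dq).
  by apply: continuous_measurable_fun; exact: gauss_aff_cont.
by move=> y; rewrite ger0_norm ?gauss_ge0 // gauss_le.
Qed.
Arguments int_qg [q lo hi b a x].


Lemma int_dqg (q : R -> R) lo hi (b a x : R) : density_on q lo hi -> 0 < b ->
  mu.-integrable setT (EFin \o
    (fun y => q y * (gauss b (x - a * y) * (- (x - a * y) / b ^+ 2)))).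
Proof.
move=> dq b0; apply: (@int_qh q lo hi _ (gc b / b) dq).
  apply: measurable_funM.
    by apply: continuous_measurable_fun; exact: gauss_aff_cont.
  by apply: continuous_measurable_fun; exact: lin_cont.
by move=> y; exact: dgauss_bound.
Qed.
Arguments int_dqg [q lo hi b a x].


Lemma Rint_dens (q : R -> R) lo hi : density_on q lo hi ->
  Rintegral mu setT q = 1.
Proof. by case=> _ [_ [iq _]]; rewrite /Rintegral iq. Qed.
Arguments Rint_dens [q lo hi].


Lemma dens_out (q : R -> R) lo hi y : density_on q lo hi -> ~~ (lo <= y <= hi) -> q y = 0.
Proof. by case=> _ [_ [_ h]] hy; apply: h; apply/negP. Qed.
Arguments dens_out [q lo hi y].


Lemma dens_ge0 (q : R -> R) lo hi y : density_on q lo hi -> 0 <= q y.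
Proof. by case=> _ [h _]. Qed.
Arguments dens_ge0 [q lo hi y].


Lemma int_kqg (q : R -> R) lo hi (k b a x : R) : density_on q lo hi ->
  mu.-integrable setT (EFin \o (fun y => k * (q y * gauss b (x - a * y)))).
Proof.
move=> dq.
have mh : measurable_fun setT (fun y => k * gauss b (x - a * y)).
  apply: measurable_funM; first exact: measurable_cst.
  by apply: continuous_measurable_fun; exact: gauss_aff_cont.
have hb : forall y, `|k * gauss b (x - a * y)| <= `|k| * gc b.
  by move=> y; rewrite normrM ler_wpM2l // ger0_norm ?gauss_ge0 // gauss_le.
have h := @int_qh q lo hi (fun y => k * gauss b (x - a * y)) (`|k| * gc b) dq mh hb.
move: h; apply: eq_integrable => // y _ /=; congr EFin; ring.
Qed.
Arguments int_kqg [q lo hi k b a x].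


Lemma lowD (q : R -> R) lo hi (b a x : R) : density_on q lo hi -> 0 < b -> 0 <= a ->
  (a * lo - x) / b ^+ 2 * Rintegral mu setT (fun y => q y * gauss b (x - a * y)) <=
  Rintegral mu setT (fun y => q y * (gauss b (x - a * y) * (- (x - a * y) / b ^+ 2))).
Proof.
move=> dq b0 a0; rewrite -RintegralZl //; last exact: int_qg dq.
apply: le_Rintegral => //; [exact: int_kqg dq | exact: int_dqg dq b0 |].
move=> y _; have [hy|hy] := boolP (lo <= y <= hi); last first.
  by rewrite (dens_out dq hy) !(mul0r, mulr0).
have -> : q y * (gauss b (x - a * y) * (- (x - a * y) / b ^+ 2)) =
  (a * y - x) / b ^+ 2 * (q y * gauss b (x - a * y)) by ring.
rewrite ler_wpM2r ?mulr_ge0 ?gauss_ge0 ?(dens_ge0 dq) //.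
rewrite ler_wpM2r ?invr_ge0 ?sqr_ge0 // lerD2r ler_wpM2l //.
by case/andP: hy.
Qed.

Lemma upD (q : R -> R) lo hi (b a x : R) : density_on q lo hi -> 0 < b -> 0 <= a ->
  Rintegral mu setT (fun y => q y * (gauss b (x - a * y) * (- (x - a * y) / b ^+ 2))) <=
  (a * hi - x) / b ^+ 2 * Rintegral mu setT (fun y => q y * gauss b (x - a * y)).
Proof.
move=> dq b0 a0; rewrite -RintegralZl //; last exact: int_qg dq.
apply: le_Rintegral => //; [exact: int_dqg dq b0 | exact: int_kqg dq |].
move=> y _; have [hy|hy] := boolP (lo <= y <= hi); last first.
  by rewrite (dens_out dq hy) !(mul0r, mulr0).
have -> : q y * (gauss b (x - a * y) * (- (x - a * y) / b ^+ 2)) =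
  (a * y - x) / b ^+ 2 * (q y * gauss b (x - a * y)) by ring.
rewrite ler_wpM2r ?mulr_ge0 ?gauss_ge0 ?(dens_ge0 dq) //.
rewrite ler_wpM2r ?invr_ge0 ?sqr_ge0 // lerD2r ler_wpM2l //.
by case/andP: hy.
Qed.

Lemma gc_gt0 (b : R) : 0 < b -> 0 < gc b.
Proof.
by move=> b0; rewrite /gc invr_gt0 sqrtr_gt0 mulr_gt0 ?exprn_gt0 // mulr_gt0 // pi_gt0.
Qed.

Lemma F_pos (q : R -> R) lo hi (b a x : R) : density_on q lo hi -> 0 < b ->
  0 < Rintegral mu setT (fun y => q y * gauss b (x - a * y)).
Proof.
move=> dq b0.
pose K := 2 * x ^+ 2 + 2 * a ^+ 2 * (lo ^+ 2 + hi ^+ 2).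
pose gm := expR (- K / (2 * b ^+ 2)) * gc b.
have gm0 : 0 < gm by rewrite mulr_gt0 ?expR_gt0 ?gc_gt0.
have le1 : Rintegral mu setT (fun y => gm * q y) <=
    Rintegral mu setT (fun y => q y * gauss b (x - a * y)).
  apply: le_Rintegral => //; last first.
  - move=> y _; have [hy|hy] := boolP (lo <= y <= hi); last first.
      by rewrite (dens_out dq hy) !(mul0r, mulr0).
    rewrite mulrC ler_wpM2l ?(dens_ge0 dq) // /gauss -/(gc b) /gm.
    rewrite ler_pM2r ?gc_gt0 // ler_expR !mulNr lerN2.
    rewrite ler_pM2r ?invr_gt0 ?mulr_gt0 ?exprn_gt0 //.
    case/andP: hy => h1 h2; rewrite /K.
    have h3 : y ^+ 2 <= lo ^+ 2 + hi ^+ 2.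
      by have [y0|y0] := lerP 0 y; nra.
    have h4 : 0 <= (x + a * y) ^+ 2 by rewrite sqr_ge0.
    have h5 : a ^+ 2 * y ^+ 2 <= a ^+ 2 * (lo ^+ 2 + hi ^+ 2).
      by rewrite ler_wpM2l ?sqr_ge0.
    nra.
  - exact: int_qg dq.
  - have hb : forall y : R, `|(fun=> gm) y| <= gm by move=> y; rewrite ger0_norm // ltW.
    have h := @int_qh q lo hi (fun=> gm) gm dq (measurable_cst _) hb.
    by move: h; apply: eq_integrable => // y _ /=; rewrite mulrC.
apply: lt_le_trans le1.
by rewrite RintegralZl ?(dens_int dq) // (Rint_dens dq) mulr1.
Qed.

Lemma refl_int (h : R -> R) : measurable_fun setT h -> (forall y, 0 <= h y) ->
  (\int[mu]_y (h y)%:E = \int[mu]_y (h (- y))%:E)%E.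
Proof.
move=> mh h0.
transitivity (\int[pushforward mu (-%R : _ -> measurableTypeR R)]_y (h y)%:E)%E.
  apply: eq_measure_integral => A mA _ /=.
  exact/esym/lebesgue_measureN.
have -> : (\int[mu]_y (h (- y))%:E = \int[mu]_(y in (-%R : _ -> measurableTypeR R) @^-1` setT) ((EFin \o h) \o -%R) y)%E by [].
rewrite -ge0_integral_pushforward //=.
- exact/measurable_EFinP.
- by move=> y _; rewrite lee_fin.
Qed.
Arguments refl_int [h].



Lemma ratio_bound (p1 pm1 : R -> R) al1 al2 beta (b a x E : R) :
  density_on p1 al1 al2 -> density_on pm1 (- al2) (- al1) ->
  beta_bounded p1 pm1 al1 al2 beta -> 1 <= beta -> 0 < b ->
  (forall y, al1 <= y <= al2 -> 2 * a * x * y / b ^+ 2 <= E) ->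
  expR (- E) / beta * Rintegral mu setT (fun y => p1 y * gauss b (x - a * y)) <=
  Rintegral mu setT (fun y => pm1 y * gauss b (x - a * y)).
Proof.
move=> d1 dm bb beta1 b0 hE.
have beta0 : 0 < beta by apply: lt_le_trans beta1.
set k := expR (- E) / beta.
have k0 : 0 <= k by rewrite divr_ge0 ?expR_ge0 // ltW.
rewrite -RintegralZl //; last exact: int_qg d1.
have mh : measurable_fun setT (fun y => pm1 y * gauss b (x - a * y)).
  apply: measurable_funM; first by case: dm.
  by apply: continuous_measurable_fun; exact: gauss_aff_cont.
have mh1 : measurable_fun setT (fun y => k * (p1 y * gauss b (x - a * y))).
  apply: measurable_funM; first exact: measurable_cst.
  apply: measurable_funM; first by case: d1.
  by apply: continuous_measurable_fun; exact: gauss_aff_cont.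
apply: fine_le.
- exact: integrable_fin_num (int_kqg d1).
- exact: integrable_fin_num (int_qg dm).
rewrite (refl_int mh); last first.
  by move=> y; rewrite mulr_ge0 ?gauss_ge0 ?(dens_ge0 dm).
apply: ae_ge0_le_integral => //.
- move=> y _; rewrite lee_fin; apply: mulr_ge0 => //.
  by apply: mulr_ge0; [exact: (dens_ge0 d1) | exact: gauss_ge0].
- exact/measurable_EFinP.
- by move=> y _; rewrite lee_fin; apply: mulr_ge0; [exact: (dens_ge0 dm) | exact: gauss_ge0].
- apply/measurable_EFinP; exact: (measurableT_comp mh (@oppr_measurable R setT)).
exists ([set al1] `|` [set al2]); split.
- by apply: measurableU; exact: measurable_set1.
- exact: countable_lebesgue_measure0 (finite_set_countable (finite_set2 al1 al2)).
move=> y /= hy; apply: contrapT => hy'; apply: hy => _.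
rewrite lee_fin.
have [hin|hout] := boolP (al1 < y < al2).
  have hm : - al2 < - y < - al1 by rewrite !ltrN2 andbC.
  have /andP[hb1 _] := bb (- y) y hm hin.
  have p1pos : 0 < p1 y.
    rewrite lt_neqAle (dens_ge0 d1) andbT; apply/negP => /eqP h.
    by move: hb1; rewrite -h invr0 mulr0 leNgt invr_gt0 beta0.
  have hpm : p1 y / beta <= pm1 (- y).
    by move: hb1; rewrite ler_pdivlMr // mulrC.
  have hg : expR (- E) * gauss b (x - a * y) <= gauss b (x - a * - y).
    rewrite /gauss -/(gc b) mulrA -expRD ler_pM2r ?gc_gt0 // ler_expR.
    have hy2 : al1 <= y <= al2 by case/andP: hin => h1 h2; rewrite !ltW.
    have := hE y hy2.
    have -> : - (x - a * - y) ^+ 2 / (2 * b ^+ 2) =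
       (- E + - (x - a * y) ^+ 2 / (2 * b ^+ 2)) + (E - 2 * a * x * y / b ^+ 2).
      by field; rewrite lt0r_neq0.
    by rewrite -subr_ge0 => h; rewrite lerDl.
  have -> : k * (p1 y * gauss b (x - a * y)) =
    (p1 y / beta) * (expR (- E) * gauss b (x - a * y)) by rewrite /k; ring.
  apply: ler_pM => //.
    by rewrite divr_ge0 ?(dens_ge0 d1) // ltW.
  by rewrite mulr_ge0 ?expR_ge0 ?gauss_ge0.
have hn : ~~ (al1 <= y <= al2).
  apply/negP => /andP[h1 h2]; move/negP: hout; apply.
  rewrite !lt_neqAle h1 h2 !andbT; apply/andP; split; apply/eqP => h; apply: hy'.
    by left.
  by right.
rewrite (dens_out d1 hn) mul0r mulr0.
by rewrite mulr_ge0 ?(dens_ge0 dm) ?gauss_ge0.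
Qed.

Lemma field_bound (p1 pm1 : R -> R) al1 al2 beta w T t x0 :
  0 < al1 -> al1 < al2 -> 1 <= beta ->
  density_on p1 al1 al2 -> density_on pm1 (- al2) (- al1) ->
  beta_bounded p1 pm1 al1 al2 beta -> 1 <= w -> 0 < ln w ->
  0 < t -> t < T -> a_t T t <= 2^-1 -> x0 < ln w / (16 * al2) ->
  a_t T t * (Num.sqrt w * al1 / beta - ln w / (16 * al2)) <=
  guided_field p1 pm1 w T t x0.
Proof.
move=> al10 al12 beta1 d1 dm bb w1 lw0 t0 tT ah xL.
have al20 : 0 < al2 by apply: lt_trans al12.
have beta0 : 0 < beta by apply: lt_le_trans beta1.
set a := a_t T t.
have a0 : 0 < a by rewrite /a /a_t expR_gt0.
have ha2 : 2 * a <= 1.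
  by move: ah; rewrite -[2^-1]mulr1 ler_pdivlMl // ltr0n.
have a1 : a < 1 by lra.
set b := b_t T t.
have b2 : b ^+ 2 = 1 - a ^+ 2.
  by rewrite /b /b_t -/a sqr_sqrtr // subr_ge0; nra.
have b0 : 0 < b by rewrite /b /b_t sqrtr_gt0 -/a subr_gt0; nra.
set L := ln w / (16 * al2).
have L0 : 0 < L by rewrite /L divr_gt0 // mulr_gt0.
set E := 2 * a * L * al2 / b ^+ 2.
have hE : forall y, al1 <= y <= al2 -> 2 * a * x0 * y / b ^+ 2 <= E.
  move=> y /andP[y1 y2]; rewrite /E ler_pM2r ?invr_gt0 ?exprn_gt0 //.
  have -> : 2 * a * x0 * y = (2 * a) * (x0 * y) by ring.
  have -> : 2 * a * L * al2 = (2 * a) * (L * al2) by ring.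
  rewrite ler_pM2l ?mulr_gt0 //.
  have y0 : 0 < y by apply: lt_le_trans y1.
  have [x00|x00] := lerP x0 0.
    apply: (le_trans (y := 0)); last by rewrite mulr_ge0 // ltW.
    by rewrite mulr_le0_ge0 // ltW.
  by apply: ler_pM => //; rewrite ltW.
have hrat := @ratio_bound p1 pm1 al1 al2 beta b a x0 E d1 dm bb beta1 b0 hE.
set kap := expR (- E) / beta.
set F1 := Rintegral mu setT (fun y => p1 y * gauss b (x0 - a * y)).
set Fm := Rintegral mu setT (fun y => pm1 y * gauss b (x0 - a * y)).
set D1 := Rintegral mu setT (fun y => p1 y * (gauss b (x0 - a * y) * (- (x0 - a * y) / b ^+ 2))).
set Dm := Rintegral mu setT (fun y => pm1 y * (gauss b (x0 - a * y) * (- (x0 - a * y) / b ^+ 2))).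
have F10 : 0 < F1 by exact: (@F_pos p1 al1 al2 b a x0 d1 b0).
have kap0 : 0 < kap by rewrite divr_gt0 ?expR_gt0.
have Fm0 : 0 < Fm by apply: lt_le_trans hrat; rewrite mulr_gt0.
have hD1 := @lowD p1 al1 al2 b a x0 d1 b0 (ltW a0).
have hDm := @upD pm1 (- al2) (- al1) b a x0 dm b0 (ltW a0).
have [dF1 eF1] := @int_deriv p1 al1 al2 b a x0 d1 b0.
have [dFm eFm] := @int_deriv pm1 (- al2) (- al1) b a x0 dm b0.
rewrite /guided_field.
have -> : score (cond_density p1 T t) x0 = D1 / F1.
  by rewrite score_eq // eF1.
have [dM eM] := @mix_deriv _ _ x0 dF1 dFm.
have -> : score (mix_density p1 pm1 T t) x0 =
    (2^-1 * D1 + 2^-1 * Dm) / (2^-1 * F1 + 2^-1 * Fm).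
  rewrite /mix_density score_eq //; first by rewrite eM eF1 eFm.
  by rewrite addr_gt0 // mulr_gt0 // invr_gt0 ltr0n.
rewrite -/F1 -/D1 in hD1; rewrite -/Fm -/Dm in hDm; rewrite -/F1 -/Fm in hrat.
have b2p : 0 < b ^+ 2 by rewrite exprn_gt0.
have ab2 : a <= b ^+ 2 by rewrite b2; nra.
have b21 : b ^+ 2 <= 1 by rewrite b2; nra.
set u0 := (a * al1 - x0) / b ^+ 2.
have hu : u0 <= D1 / F1 by rewrite ler_pdivlMr.
have -> : (2^-1 * D1 + 2^-1 * Dm) / (2^-1 * F1 + 2^-1 * Fm) =
    D1 / F1 - (D1 * Fm - Dm * F1) / (F1 * (F1 + Fm)).
  field; apply/andP; split; rewrite lt0r_neq0 //; first by rewrite addr_gt0.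
have hG : 2 * a * al1 / b ^+ 2 * (F1 * Fm) <= D1 * Fm - Dm * F1.
  have h1 : u0 * F1 * Fm <= D1 * Fm by rewrite ler_pM2r.
  have h2 : Dm * F1 <= (a * - al1 - x0) / b ^+ 2 * Fm * F1 by rewrite ler_pM2r.
  have -> : 2 * a * al1 / b ^+ 2 * (F1 * Fm) =
     u0 * F1 * Fm - (a * - al1 - x0) / b ^+ 2 * Fm * F1 by rewrite /u0; field; rewrite lt0r_neq0.
  by apply: lerB.
have F1m : 0 < F1 + Fm by rewrite addr_gt0.
have hG2 : 2 * a * al1 / b ^+ 2 * (Fm / (F1 + Fm)) <=
    (D1 * Fm - Dm * F1) / (F1 * (F1 + Fm)).
  have -> : 2 * a * al1 / b ^+ 2 * (Fm / (F1 + Fm)) =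
     2 * a * al1 / b ^+ 2 * (F1 * Fm) / (F1 * (F1 + Fm)).
    by field; rewrite !lt0r_neq0.
  by rewrite ler_pM2r // invr_gt0 mulr_gt0.
have kap1 : kap <= 1.
  rewrite /kap ler_pdivrMr // mul1r; apply: le_trans beta1.
  rewrite expR_le1 oppr_le0 /E; apply: divr_ge0; last exact: sqr_ge0.
  apply/ltW; apply: mulr_gt0 => //; apply: mulr_gt0 => //; apply: mulr_gt0 => //.
have hrho : kap / 2 <= Fm / (F1 + Fm).
  rewrite ler_pdivlMr //.
  have -> : kap / 2 * (F1 + Fm) = (kap * F1 + kap * Fm) / 2 by ring.
  rewrite ler_pdivrMr ?ltr0n //.
  have : kap * Fm <= Fm by rewrite ler_piMl // ltW.
  by move: hrat; rewrite -/kap => hr; lra.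
have wpos : 0 < w by apply: lt_le_trans w1.
have sqw : Num.sqrt w = expR (ln w / 2).
  rewrite -[w in LHS](@lnK _ w) ?posrE //.
  have -> : ln w = ln w / 2 + ln w / 2 by field.
  rewrite expRD -expr2 sqrtr_sqr ger0_norm ?expR_ge0 //.
  by congr expR; field.
have LE : L * al2 = ln w / 16 by rewrite /L; field; rewrite lt0r_neq0.
have EE : E <= ln w / 2.
  have -> : E = a / b ^+ 2 * (2 * (L * al2)) by rewrite /E; field; rewrite lt0r_neq0.
  rewrite LE; apply: (le_trans (y := 1 * (2 * (ln w / 16)))).
    rewrite ler_wpM2r ?mulr_ge0 ?divr_ge0 ?ltW //.
    by rewrite ltr_pdivrMr // mul1r b2; nra.
  rewrite mul1r -subr_ge0 (_ : ln w / 2 - 2 * (ln w / 16) = ln w * (3 / 8)).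
    by rewrite mulr_ge0 ?divr_ge0 ?ltW.
  by field.
have hkap : Num.sqrt w / beta <= w * kap.
  rewrite /kap mulrA ler_pM2r ?invr_gt0 // sqw.
  rewrite -[w in X in _ <= X](@lnK _ w) ?posrE // -expRD ler_expR.
  lra.
set G := (D1 * Fm - Dm * F1) / (F1 * (F1 + Fm)).
have hA : - L * a <= x0 + u0.
  rewrite -(ler_pM2r b2p) /u0.
  have -> : (x0 + (a * al1 - x0) / b ^+ 2) * b ^+ 2 = x0 * b ^+ 2 + (a * al1 - x0).
    by field; rewrite lt0r_neq0.
  rewrite b2 -subr_ge0.
  have -> : x0 * (1 - a ^+ 2) + (a * al1 - x0) - - L * a * (1 - a ^+ 2) =
    (L - x0) * a ^+ 2 + a * al1 + L * a * (1 - a - a ^+ 2) by ring.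
  have h1 : 0 <= (L - x0) * a ^+ 2 by rewrite mulr_ge0 ?sqr_ge0 // subr_ge0 ltW.
  have h2 : 0 <= a * al1 by rewrite mulr_ge0 // ltW.
  have h3 : 0 <= L * a * (1 - a - a ^+ 2).
    apply: mulr_ge0; first by apply: mulr_ge0; apply: ltW.
    have h4 : 0 <= a * (1 - 2 * a) by rewrite mulr_ge0 ?subr_ge0 // ltW.
    nra.
  by rewrite !addr_ge0.
have hB : a * al1 * (Num.sqrt w / beta) <= w * G.
  have c0 : 0 <= 2 * a * al1 / b ^+ 2 by rewrite divr_ge0 ?sqr_ge0 ?mulr_ge0 ?ltW.
  have h1 : w * (2 * a * al1 / b ^+ 2 * (kap / 2)) <= w * G.
    apply: ler_wpM2l; first exact: ltW wpos. apply: (le_trans _ hG2).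
    by rewrite ler_wpM2l.
  apply: le_trans h1.
  have -> : w * (2 * a * al1 / b ^+ 2 * (kap / 2)) = (w * kap) * (a * al1) * (b ^+ 2)^-1.
    by field; rewrite lt0r_neq0.
  apply: (le_trans (y := (w * kap) * (a * al1))).
    by rewrite mulrC ler_wpM2r // mulr_ge0 // ltW.
  rewrite ler_peMr ?invf_ge1 //.
  by apply: mulr_ge0; apply: mulr_ge0; apply: ltW.
have -> : x0 + (w + 1) * (D1 / F1) - w * (D1 / F1 - G) =
   (x0 + u0) + (D1 / F1 - u0) + w * G by ring.
have -> : a * (Num.sqrt w * al1 / beta - L) =
   - L * a + 0 + a * al1 * (Num.sqrt w / beta) by ring.
by rewrite lerD // lerD // subr_ge0.
Qed.

End helpers.

Theorem lemma3p3 (R : realType) (al1 al2 beta w T : R) (p1 pm1 x : R -> R) :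
  0 < al1 -> al1 < al2 -> 1 <= beta ->
  density_on p1 al1 al2 -> density_on pm1 (- al2) (- al1) ->
  beta_bounded p1 pm1 al1 al2 beta ->
  1 <= w -> 2 * ln 2 <= T ->
  al2 ^+ 2 <= ln w / 4 ->
  ln w <= al1 * Num.sqrt w ->
  ln w / al2 <= Num.sqrt w * al1 / beta ->
  guided_solution p1 pm1 w T x ->
  - (Num.sqrt w * al1 / (16 * beta)) <= xtilde x T (expR (- T)) ->
  exists s0, expR (- T) <= s0 <= 1 /\ ln w / (16 * al2) <= xtilde x T s0.
Proof.
move=> al10 al12 beta1 d1 dm bb w1 T2 al2w lwle lwrat [xc xd] x0h.
have al20 : 0 < al2 by apply: lt_trans al12.
have beta0 : 0 < beta by apply: lt_le_trans beta1.
have lw0 : 0 < ln w.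
  have : 0 < al2 ^+ 2 by rewrite exprn_gt0.
  move=> h; have := lt_le_trans h al2w.
  by rewrite pmulr_lgt0 // invr_gt0 ltr0n.
set K := Num.sqrt w * al1 / (16 * beta).
set L := ln w / (16 * al2).
have K0 : 0 < K by rewrite /K divr_gt0 ?mulr_gt0 // sqrtr_gt0; apply: lt_le_trans w1.
have LK : L <= K.
  have -> : L = (ln w / al2) / 16 by rewrite /L; field; rewrite lt0r_neq0.
  have -> : K = (Num.sqrt w * al1 / beta) / 16 by rewrite /K; field; rewrite lt0r_neq0.
  by rewrite ler_pM2r // invr_gt0 ltr0n.
have ln20 : 0 < ln (2 : R) by rewrite ln_gt0 // ltr1n.
set t1 := T - ln 2.
have t10 : 0 < t1 by rewrite /t1 subr_gt0; lra.
have t1T : t1 < T by rewrite /t1 ltrBlDr ltrDl.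
have at1 : a_t T t1 = 2^-1.
  by rewrite /a_t /t1 (_ : T - ln 2 - T = - ln 2) ?expRN ?lnK ?posrE //; ring.
have aT0 : expR (- T) <= 4^-1.
  apply: (le_trans (y := expR (- (2 * ln 2)))); first by rewrite ler_expR lerN2.
  have -> : 2 * ln (2 : R) = ln 2 + ln 2 by ring.
  rewrite expRN expRD lnK ?posrE //.
  have -> : (2 : R) * 2 = 4 by ring.
  by [].
have x0e : xtilde x T (expR (- T)) = x 0 by rewrite /xtilde expRK subrr.
rewrite x0e -/K in x0h.
have [[t [/andP[t0 tt1] Lt]]|nex] := pselect (exists t, 0 <= t <= t1 /\ L <= x t).
  exists (expR (t - T)); split.
    apply/andP; split; first by rewrite ler_expR; lra.
    by rewrite -[X in _ <= X]expR0 ler_expR; lra.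
  by rewrite /xtilde expRK (_ : T + (t - T) = t) //; ring.
have xL : forall t, 0 <= t <= t1 -> x t < L.
  move=> t ht; rewrite ltNge; apply/negP => hl; apply: nex; exists t; split => //.
exfalso.
set C := Num.sqrt w * al1 / beta - L.
have C0 : 0 <= C.
  rewrite /C subr_ge0 (_ : Num.sqrt w * al1 / beta = 16 * K); last first.
    by rewrite /K; field; rewrite lt0r_neq0.
  apply: (le_trans LK); rewrite ler_peMl ?ltW //.
  by rewrite ltr1n.
pose h := fun t => x t - C * expR (t - T).
have hd : forall c, c \in `]0, t1[ ->
    is_derive c 1 h (derive1 x c - C * expR (c - T)).
  move=> c; rewrite in_itv /= => /andP[c0 ct1].
  have [dx _] := xd c (ltac:(rewrite c0 /=; exact: lt_trans ct1 t1T)).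
  have hx := derivableP dx.
  have he : is_derive c (1:R) (fun t => expR (t - T)) (expR (c - T)).
    have h1 := is_derive_expR (c - T).
    have h2 : is_derive c (1:R) (fun t : R => t - T) 1.
      by apply: trigger_derive; rewrite /GRing.scale /=; ring.
    have h3 := @is_derive1_comp R expR (fun t => t - T) c _ _ h1 h2.
    have -> : (fun t => expR (t - T)) = (expR \o (fun t => t - T)) by [].
    by apply: (is_derive_eq h3); rewrite mulr1.
  rewrite /h; apply: trigger_derive; rewrite /GRing.scale /= derive1E.
  ring.
have sub : `[0, t1] `<=` `[0, T].
  move=> z; rewrite /= !in_itv /= => /andP[z0 z1]; rewrite z0 /=.
  exact: le_trans z1 (ltW t1T).
have xc1 := continuous_subspaceW sub xc.
have gc : continuous (fun t => C * expR (t - T)).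
  move=> z; apply/differentiable_continuous/derivable1_diffP.
  have h1 := is_derive_expR (z - T).
  have h2 : is_derive z (1:R) (fun t : R => t - T) 1.
    by apply: trigger_derive; rewrite /GRing.scale /=; ring.
  have h3 := @is_derive1_comp R expR (fun t => t - T) z _ _ h1 h2.
  have -> : (fun t => C * expR (t - T)) = (fun t => C * (expR \o (fun t => t - T)) t) by [].
  have h4 : is_derive z (1:R) (fun t => C * (expR \o (fun t => t - T)) t) (C * (expR (z - T) * 1)).
    by apply: trigger_derive; rewrite /GRing.scale /=; ring.
  by case: h4.
have hc : {within `[0, t1], continuous h}.
  have -> : h = (x + (fun t => - (C * expR (t - T))))%R by [].
  move=> z; apply: continuousD; first exact: xc1.
  apply: continuous_subspaceT => u; exact: cvgN (gc u).
have [c cin hmvt] := MVT t10 hd hc.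
move: cin; rewrite in_itv /= => /andP[c0 ct1].
have cT : 0 < c < T by rewrite c0 /=; exact: lt_trans ct1 t1T.
have [_ dxc] := xd c cT.
have ac : a_t T c <= 2^-1.
  by rewrite -at1 /a_t ler_expR lerD2r ltW.
have xcL : x c < L by apply: xL; rewrite (ltW c0) (ltW ct1).
have fb := @field_bound R p1 pm1 al1 al2 beta w T c (x c) al10 al12 beta1 d1 dm bb
  w1 lw0 c0 (proj2 (andP cT)) ac xcL.
have D0 : 0 <= derive1 x c - C * expR (c - T).
  by rewrite dxc subr_ge0 mulrC.
have hge : 0 <= h t1 - h 0 by rewrite hmvt mulr_ge0 // subr0 ltW.
move: hge; rewrite /h.
have -> : expR (t1 - T) = 2^-1 by [].
rewrite sub0r.
set P := C * expR (- T).
have hP : 4 * P <= C.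
  rewrite /P mulrCA -[X in _ <= X]mulr1 ler_wpM2l //.
  by move: aT0; rewrite -[4^-1]mulr1 ler_pdivlMl // ltr0n.
have hK : 15 * K <= C.
  rewrite /C (_ : Num.sqrt w * al1 / beta = 16 * K); last first.
    by rewrite /K; field; rewrite lt0r_neq0.
  lra.
have xt1 := xL t1 (ltac:(rewrite lexx andbT; exact: ltW)).
have h2 : C * 2^-1 * 2 = C by field.
move=> hh.
have hh2 : 0 <= (x t1 - C * 2^-1 - (x 0 - P)) * 2 by rewrite mulr_ge0.
move: hh2; rewrite mulrBl mulrBl h2 => hh2.
lra.
Qed.
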